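(* Let $\varphi$ be a read-once Boolean formula over the variables $x_1,\dots,x_n$ (each variable occurs exactly once), built from the unary operator $\neg$ and the binary operators $\wedge,\vee,\oplus$, and fix a truth assignment to $x_1,\dots,x_n$. Let $r$ be the root of the parse tree of $\varphi$. Then $\mathrm{DEPENDS}(r)$, defined below, equals the smallest number of variables of $\varphi$ whose values must be changed in order to change the value of $\varphi$.
   Context: The parse tree of $\varphi$ has the variables as leaves and the operator occurrences (gates) as internal nodes; under the fixed assignment every node $g$ has a Boolean value (the value of the subformula rooted at $g$). For an internal node $g$ with $g=g_l\circ g_r$, $\circ\in\{\wedge,\vee,\oplus\}$, define $\mathcal{I}(g)$ as follows, in this order of priority: $\mathcal{I}(g)=\text{Either}$ if negating the value of $g_l$ alone changes the value of $g$ and negating the value of $g_r$ alone changes the value of $g$; otherwise $\mathcal{I}(g)=\text{Left}$ if negating the value of $g_l$ alone changes the value of $g$; otherwise $\mathcal{I}(g)=\text{Right}$ if negating the value of $g_r$ alone changes the value of $g$; otherwise $\mathcal{I}(g)=\text{Both}$ (negating both values changes $g$). For $g=\neg g_l$, $\mathcal{I}(g)=\text{Pass}$. The recursive procedure $\mathrm{DEPENDS}$ assigns to each node $g$ an integer $\mathrm{deps}(g)$ and returns it: if $g$ is a leaf, $\mathrm{deps}(g)=1$; otherwise, with $d_l=\mathrm{DEPENDS}(g_l)$ and $d_r=\mathrm{DEPENDS}(g_r)$ (only $d_l$ when $g=\neg g_l$), $\mathrm{deps}(g)=d_l+d_r$ if $\mathcal{I}(g)=\text{Both}$, $\min\{d_l,d_r\}$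 if Either, $d_l$ if Left, $d_r$ if Right, and $d_l$ if Pass. *)

(* Defs.v *)
From mathcomp Require Import all_boot.
Set Implicit Arguments. Unset Strict Implicit. Unset Printing Implicit Defensive.

Inductive binop := OAnd | OOr | OXor.

Definition eval_op (o : binop) (b c : bool) : bool :=
  match o with OAnd => b && c | OOr => b || c | OXor => xorb b c end.

(* Boolean formulas over variables x_0, ..., x_{n-1}; the constructors are the
   nodes of the parse tree (leaves = variable occurrences, internal nodes = gates). *)
Inductive formula (n : nat) :=
| FVar of 'I_n
| FNot of formula n
| FBin of binop & formula n & formula n.

Arguments FVar {n}. Arguments FNot {n}. Arguments FBin {n}.

Fixpoint eval n (a : 'I_n -> bool) (f : formula n) : bool :=
  match f with
  | FVar i => a i
  | FNot g => ~~ eval a g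
  | FBin o l r => eval_op o (eval a l) (eval a r)
  end.

Fixpoint vars n (f : formula n) : seq 'I_n :=
  match f with
  | FVar i => [:: i]
  | FNot g => vars g
  | FBin _ l r => vars l ++ vars r
  end.

Definition read_once n (f : formula n) : Prop := perm_eq (vars f) (enum 'I_n).

(* The procedure DEPENDS, with the classification I(g) inlined:
   cl = negating g_l alone changes g, cr = negating g_r alone changes g;
   Either -> min, Left -> d_l, Right -> d_r, Both -> d_l + d_r, Pass -> d_l. *)
Fixpoint depends n (a : 'I_n -> bool) (f : formula n) : nat :=
  match f with
  | FVar _ => 1
  | FNot g => depends a g
  | FBin o l r =>
      let vl := eval a l in
      let vr := eval a r in
      let v := eval_op o vl vr in
      let cl := eval_op o (~~ vl) vr != v in
      let cr := eval_op o vl (~~ vr) != v in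
      let dl := depends a l in
      let dr := depends a r in
      if cl && cr then minn dl dr
      else if cl then dl
      else if cr then dr
      else dl + dr
  end.

Definition nchanged n (a b : 'I_n -> bool) : nat := #|[set i | a i != b i]|.

(* Main.v *)
Require Import Defs.
From mathcomp Require Import all_boot.
From mathcomp Require Import zify.

Lemma eval_eq n (b c : 'I_n -> bool) (g : formula n) :
  (forall i, i \in vars g -> b i = c i) -> eval b g = eval c g.
Proof.
elim: g => [i|g IH|o l IHl r IHr] /= H.
- by apply: H; rewrite inE.
- by rewrite IH.
- rewrite IHl ?IHr // => i Hi; apply: H; rewrite mem_cat Hi ?orbT //.
Qed.

Lemma negb_ne (x y : bool) : x != y -> x = ~~ y.
Proof. by case: x; case: y. Qed.

Lemma both_flip o x y : (eval_op o (~~x) y != eval_op o x y) = false ->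
  (eval_op o x (~~y) != eval_op o x y) = false -> eval_op o (~~x) (~~y) != eval_op o x y.
Proof. by case: o; case: x; case: y. Qed.

Lemma arith o (xl xr vl vr : bool) dl dr Dl Dr : (xl != vl -> dl <= Dl) -> (xr != vr -> dr <= Dr) ->
  eval_op o xl xr != eval_op o vl vr ->
  (let v := eval_op o vl vr in
   let cl := eval_op o (~~ vl) vr != v in
   let cr := eval_op o vl (~~ vr) != v in
   if cl && cr then minn dl dr else if cl then dl else if cr then dr else dl + dr) <= Dl + Dr.
Proof.
case: o; case: xl; case: xr; case: vl; case: vr => //= H1 H2 _;
 try have := H1 isT; try have := H2 isT; lia.
Qed.

Lemma key n (a : 'I_n -> bool) (g : formula n) : uniq (vars g) ->
 (exists b, (forall i, i \notin vars g -> b i = a i) /\ eval b g != eval a g /\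
    #|[set i | a i != b i]| = depends a g) /\
 (forall b, eval b g != eval a g ->
    depends a g <= #|[set i | (i \in vars g) && (a i != b i)]|).
Proof.
elim: g => [i|g IH|o l IHl r IHr] /= U.
- split.
  + exists (fun j => if j == i then ~~ a i else a j); split.
      by move=> j; rewrite inE => /negbTE ->.
    rewrite eqxx; split; first by case: (a i).
    rewrite (_ : [set _ | _] = [set i]) ?cards1 //.
    apply/setP => j; rewrite !inE; case: (eqVneq j i) => [->|]; first by case: (a i).
    by rewrite eqxx.
  + move=> b Hb; rewrite card_gt0; apply/set0Pn; exists i; rewrite !inE eqxx /=.
    by rewrite eq_sym.
- have [[b [b1 [b2 b3]]] B] := IH U; split; last first.
    by move=> c Hc; apply: B; move: Hc; case: (eval c g); case: (eval a g).
  exists b; split => //; split => //; by move: b2; case: (eval b g); case: (eval a g).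
- move: U; rewrite /= => U; move: U; rewrite cat_uniq => /and3P [Ul Hlr Ur].
  have disj : forall i, i \in vars l -> i \notin vars r.
    move=> i Hi; apply/negP => Hr; move/hasPn: Hlr => /(_ i Hr) /=.
    by rewrite Hi.
  have [[bl [bl1 [bl2 bl3]]] Bl] := IHl Ul.
  have [[br [br1 [br2 br3]]] Br] := IHr Ur.
  split.
  + pose comb (c d : 'I_n -> bool) i := if i \in vars l then c i else d i.
    have K : forall c d, (forall i, i \notin vars l -> c i = a i) ->
       (forall i, i \notin vars r -> d i = a i) ->
       eval_op o (eval c l) (eval d r) != eval_op o (eval a l) (eval a r) ->
       exists b, (forall i, i \notin vars l ++ vars r -> b i = a i) /\
         eval_op o (eval b l) (eval b r) != eval_op o (eval a l) (eval a r) /\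
         #|[set i | a i != b i]| = #|[set i | a i != c i]| + #|[set i | a i != d i]|.
      move=> c d Hc Hd Hne; exists (comb c d); split.
        by move=> i; rewrite mem_cat negb_or /comb => /andP [/negbTE -> /Hd].
      split.
        rewrite (@eval_eq _ (comb c d) c l); last by move=> i Hi; rewrite /comb Hi.
        rewrite (@eval_eq _ (comb c d) d r) //.
        by move=> i Hi; rewrite /comb; case: ifP => // Hl; move: (disj _ Hl); rewrite Hi.
      rewrite -cardsUI (_ : _ :&: _ = set0) ?cards0 ?addn0.
        apply: eq_card => i; rewrite !inE /comb.
        case: ifP => Hl.
          by rewrite (Hd i (disj _ Hl)) eqxx orbF.
        by rewrite (Hc i (negbT Hl)) eqxx.
      apply/setP => i; rewrite !inE; apply/negP => /andP [H1 H2].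
      have Hl : i \in vars l by apply: contraR H1 => /Hc ->.
      by move: H2; rewrite (Hd i (disj _ Hl)) eqxx.
    have a1 : forall i, i \notin vars l -> a i = a i by [].
    have a2 : forall i, i \notin vars r -> a i = a i by [].
    have a3 : #|[set i | a i != a i]| = 0.
      by apply/eqP; rewrite cards_eq0; apply/eqP/setP => i; rewrite !inE eqxx.
    move: (negb_ne _ _ bl2) (negb_ne _ _ br2) => E1 E2.
    case: (leqP (depends a l) (depends a r)) => Hlr'.
    * case Hcl: (eval_op o (~~ eval a l) (eval a r) != eval_op o (eval a l) (eval a r)).
      - have [b [? [? Hb]]] := K _ _ bl1 a2 (ltac:(by rewrite E1)).
        exists b; split => //; split => //.
        rewrite Hb a3 addn0 bl3.
        case: ifP => _ //; by rewrite (minn_idPl Hlr').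
      - case Hcr: (eval_op o (eval a l) (~~ eval a r) != eval_op o (eval a l) (eval a r)).
        + have [b [? [? Hb]]] := K _ _ a1 br1 (ltac:(by rewrite E2)).
          by exists b; split => //; split => //; rewrite Hb a3 br3.
        + have [b [? [? Hb]]] := K _ _ bl1 br1 (ltac:(rewrite E1 E2; exact: both_flip Hcl Hcr)).
          by exists b; split => //; split => //; rewrite Hb bl3 br3.
    * case Hcr: (eval_op o (eval a l) (~~ eval a r) != eval_op o (eval a l) (eval a r)).
      - have [b [? [? Hb]]] := K _ _ a1 br1 (ltac:(by rewrite E2)).
        exists b; split => //; split => //.
        rewrite Hb a3 br3 add0n andbT.
        case: (eval_op o (~~ eval a l) (eval a r) != _) => //.
      - case Hcl: (eval_op o (~~ eval a l) (eval a r) != eval_op o (eval a l) (eval a r)).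
        + have [b [? [? Hb]]] := K _ _ bl1 a2 (ltac:(by rewrite E1)).
          by exists b; split => //; split => //; rewrite Hb a3 bl3 addn0.
        + have [b [? [? Hb]]] := K _ _ bl1 br1 (ltac:(rewrite E1 E2; exact: both_flip Hcl Hcr)).
          by exists b; split => //; split => //; rewrite Hb bl3 br3.
  + move=> b Hb.
    rewrite (_ : [set _ | _] = [set i | (i \in vars l) && (a i != b i)] :|:
                               [set i | (i \in vars r) && (a i != b i)]); last first.
      by apply/setP => i; rewrite !inE mem_cat andb_orl.
    rewrite cardsU (_ : _ :&: _ = set0) ?cards0 ?subn0; last first.
      apply/setP => i; rewrite !inE; apply/negP => /andP [/andP [H1 _] /andP [H2 _]].
      by move: (disj _ H1); rewrite H2.
    exact: arith (Bl b) (Br b) Hb.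
Qed.

Theorem lemma1 (n : nat) (phi : formula n) (a : 'I_n -> bool) :
  read_once phi ->
  (exists b : 'I_n -> bool, eval b phi != eval a phi /\ nchanged a b = depends a phi) /\
  (forall b : 'I_n -> bool, eval b phi != eval a phi -> depends a phi <= nchanged a b).
Proof.
move=> R; have U : uniq (vars phi) by rewrite (perm_uniq R) enum_uniq.
have [[b [_ [b2 b3]]] B] := @key _ a _ U; split; first by exists b.
move=> c Hc; apply: leq_trans (B c Hc) _; apply: subset_leq_card.
by apply/subsetP => i; rewrite !inE => /andP [].
Qed.
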